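(* Let $\mathbb{C}$ be a locally small category and $\mathbb{C}_{\mathit{fin}}$ a full subcategory satisfying (C1)–(C5) below. Let $\mathbb{A}$ be a full subcategory of $\mathbb{C}_{\mathit{fin}}$, let $F\in\mathrm{Ob}(\mathbb{C})$ be universal and locally finite for $\mathbb{A}$, and let $A\in\mathrm{Ob}(\mathbb{A})$ and $t\ge2$ be arbitrary. Assume that for every $B\in\mathrm{Ob}(\mathbb{A})$ with $A\to B$ there is a coloring $\lambda_B:\hom(A,B)\to\{0,\dots,t-1\}$ essential at $B$. Then there exists an essential coloring $\gamma:\hom(A,F)\to\{0,\dots,t-1\}$.
   Context: Write $A\to B$ if $\hom(A,B)\ne\varnothing$. Conditions: (C1) all morphisms of $\mathbb{C}$ are monomorphisms; (C2) $\mathrm{Ob}(\mathbb{C}_{\mathit{fin}})$ is a set; (C3) $\hom(A,B)$ is finite for $A,B\in\mathrm{Ob}(\mathbb{C}_{\mathit{fin}})$; (C4) for every $F\in\mathrm{Ob}(\mathbb{C})$ there is $A\in\mathrm{Ob}(\mathbb{C}_{\mathit{fin}})$ with $A\to F$; (C5) for every $B\in\mathrm{Ob}(\mathbb{C}_{\mathit{fin}})$ the set $\{A\in\mathrm{Ob}(\mathbb{C}_{\mathit{fin}}):A\to B\}$ is finite. $F$ is universal for $\mathbb{A}$ if $A\to F$ for all $A\in\mathrm{Ob}(\mathbb{A})$. $F$ is locally finite for $\mathbb{A}$ if for all $A,B\in\mathrm{Ob}(\mathbb{A})$, $e\in\hom(A,F)$, $f\in\hom(B,F)$ there exist $D\in\mathrm{Ob}(\mathbb{A})$,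 $r\in\hom(D,F)$, $p\in\hom(A,D)$, $q\in\hom(B,D)$ with $r\cdot p=e$, $r\cdot q=f$, such that for every $H\in\mathrm{Ob}(\mathbb{C})$, $r'\in\hom(H,F)$, $p'\in\hom(A,H)$, $q'\in\hom(B,H)$ with $r'\cdot p'=e$, $r'\cdot q'=f$ there is $s\in\hom(D,H)$ with $r'\cdot s=r$, $s\cdot p=p'$, $s\cdot q=q'$. For $\chi:\hom(A,F)\to\{0,\dots,k-1\}$ and $w\in\hom(B,F)$, $\chi^{(w)}(f)=\chi(w\cdot f)$ for $f\in\hom(A,B)$; $\ker g=\{(x,y):g(x)=g(y)\}$. A coloring $\lambda:\hom(A,B)\to\{0,\dots,t-1\}$ is essential at $B$ if for every $k\ge2$ and every $\chi:\hom(A,F)\to\{0,\dots,k-1\}$ there is $w\in\hom(B,F)$ with $\ker\lambda\subseteq\ker\chi^{(w)}$. A coloring $\gamma:\hom(A,F)\to\{0,\dots,t-1\}$ is essential if for every $B\in\mathrm{Ob}(\mathbb{A})$ with $A\to B$ and every $w\in\hom(B,F)$ the coloring $\gamma^{(w)}$ is essential at $B$. *)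

(* Defs.v *)
From mathcomp Require Import all_boot.
From Stdlib Require Import List.

Set Implicit Arguments.
Unset Strict Implicit.
Unset Printing Implicit Defensive.

Record Category := {
  Ob :> Type;
  hom : Ob -> Ob -> Type;
  idm : forall A, hom A A;
  comp : forall A B C, hom B C -> hom A B -> hom A C;
  comp_assoc : forall A B C D (h : hom C D) (g : hom B C) (f : hom A B),
      comp h (comp g f) = comp (comp h g) f;
  comp_id_l : forall A B (f : hom A B), comp (idm B) f = f;
  comp_id_r : forall A B (f : hom A B), comp f (idm A) = f
}.

Arguments hom {c} _ _.
Arguments idm {c} _.
Arguments comp {c A B C} _ _.

Section Defs.
Variable C : Category.

Definition arrow (A B : C) : Prop := inhabited (hom A B).

Definition finite_type (T : Type) : Prop :=
  exists l : list T, forall x : T, In x l.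

(* Full subcategories are given by predicates on objects.
   fin : the objects of C_fin. *)
Definition C1 : Prop :=
  forall (X Y Z : C) (f : hom Y Z) (g h : hom X Y), comp f g = comp f h -> g = h.
Definition C3 (fin : C -> Prop) : Prop :=
  forall X Y : C, fin X -> fin Y -> finite_type (hom X Y).
Definition C4 (fin : C -> Prop) : Prop :=
  forall Fo : C, exists X : C, fin X /\ arrow X Fo.
Definition C5 (fin : C -> Prop) : Prop :=
  forall Y : C, fin Y -> exists l : list C, forall X : C, fin X -> arrow X Y -> In X l.

Definition universal (Aob : C -> Prop) (F : C) : Prop :=
  forall X : C, Aob X -> arrow X F.

Definition locally_finite (Aob : C -> Prop) (F : C) : Prop :=
  forall (X Y : C), Aob X -> Aob Y ->
  forall (e : hom X F) (f : hom Y F),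
  exists (D : C) (r : hom D F) (p : hom X D) (q : hom Y D),
    Aob D /\ comp r p = e /\ comp r q = f /\
    forall (H : C) (r' : hom H F) (p' : hom X H) (q' : hom Y H),
      comp r' p' = e -> comp r' q' = f ->
      exists s : hom D H, comp r' s = r /\ comp s p = p' /\ comp s q = q'.

Definition recolor (X Y F : C) (k : nat) (chi : hom X F -> 'I_k) (w : hom Y F)
  : hom X Y -> 'I_k := fun f => chi (comp w f).

Definition ker_sub (T : Type) (k1 k2 : nat) (g1 : T -> 'I_k1) (g2 : T -> 'I_k2) : Prop :=
  forall x y : T, g1 x = g1 y -> g2 x = g2 y.

Definition essential_at (F X Y : C) (t : nat) (lam : hom X Y -> 'I_t) : Prop :=
  forall (k : nat), 2 <= k ->
  forall chi : hom X F -> 'I_k,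
  exists w : hom Y F, ker_sub lam (recolor chi w).

Definition essential (Aob : C -> Prop) (F X : C) (t : nat) (gam : hom X F -> 'I_t) : Prop :=
  forall Y : C, Aob Y -> arrow X Y ->
  forall w : hom Y F, essential_at F (recolor gam w).

End Defs.

(* Main.v *)
Require Import Defs.
From mathcomp Require Import all_boot.
From mathcomp Require Import boolp classical_sets filter.
From Stdlib Require List.
Require Import Defs.

Lemma ess_ext (C : Category) (F X Y : C) t (l1 l2 : hom X Y -> 'I_t) :
  (forall g, l1 g = l2 g) -> essential_at F l1 -> essential_at F l2.
Proof.
move=> E H k Hk chi; have [w Hw] := H k Hk chi; exists w => x y Exy.
by apply: Hw; rewrite !E.
Qed.

Lemma ess_restr (C : Category) (F X B D : C) t (lam : hom X D -> 'I_t) (p : hom B D) :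
  essential_at F lam -> essential_at F (fun g : hom X B => lam (comp p g)).
Proof.
move=> H k Hk chi; have [w Hw] := H k Hk chi; exists (comp w p) => x y Exy.
rewrite /recolor -!comp_assoc; exact: (Hw _ _ Exy).
Qed.

Lemma amalg (C : Category) (Aob : C -> Prop) (F A : C) (HA : Aob A)
  (Huniv : universal Aob F) (Hlf : locally_finite Aob F)
  (cs : list {B : C & hom B F}) :
  exists (D : C) (r : hom D F), Aob D /\ arrow A D /\
   forall c, List.In c cs -> Aob (projT1 c) ->
     exists p : hom (projT1 c) D, comp r p = projT2 c.
Proof.
elim: cs => [|[B w] cs [D [r [AD [[aD] H]]]]].
  have [r] := Huniv A HA; exists A, r; split=> //; split=> //.
  exact: (inhabits (idm A)).
case: (pselect (Aob B)) => AB.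
  have [D' [r' [p [q [AD' [E1 [E2 _]]]]]]] := Hlf B D AB AD w r.
  exists D', r'; split=> //; split; first exact: (inhabits (comp q aD)).
  move=> c [<-|Hc] Ac; first by exists p.
  have [pc Ec] := H c Hc Ac; exists (comp q pc); by rewrite comp_assoc E2.
exists D, r; split=> //; split; first exact: inhabits aD.
move=> c [<-|Hc] Ac; [exact: (False_ind _ (AB Ac)) | exact: H].
Qed.

Lemma ultra_fin (T : Type) (U : set_system T) (UU : UltraFilter U) (h : T -> nat) (n : nat) :
  forall Q, U Q -> (forall x, Q x -> h x < n) ->
  exists i, i < n /\ U (fun x => h x = i).
Proof.
elim: n => [|n IH] Q UQ Hn.
  have [x Qx] := @filter_ex _ U _ _ UQ.
  by have := Hn x Qx.
case: (in_ultra_setVsetC (fun x => h x = n) UU) => Hc.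
  by exists n; split.
have UQ' : U (fun x => Q x /\ ~ (h x = n)) by apply: (filterI UQ Hc).
have H' : forall x, (Q x /\ ~ (h x = n)) -> h x < n.
  move=> x [Qx Nx]; have := Hn x Qx; rewrite ltnS leq_eqVlt.
  by case/orP => [/eqP E|] //; case: (Nx E).
have [i [Hi Ui]] := IH _ UQ' H'.
by exists i; split=> //; apply: ltnW.
Qed.

Theorem lemma3p5 (C : Category) (fin : C -> Prop)
  (HC1 : C1 C) (HC3 : C3 fin) (HC4 : C4 fin) (HC5 : C5 fin)
  (Aob : C -> Prop) (HAfin : forall X : C, Aob X -> fin X)
  (F : C) (Huniv : universal Aob F) (Hlf : locally_finite Aob F)
  (A : C) (HA : Aob A) (t : nat) (Ht : 2 <= t)
  (Hlam : forall B : C, Aob B -> arrow A B ->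
          exists lam : hom A B -> 'I_t, essential_at F lam) :
  exists gam : hom A F -> 'I_t, essential Aob gam.
Proof.
pose X := hom A F -> 'I_t.
pose S (c : {B : C & hom B F}) : set X := fun g =>
  Aob (projT1 c) -> arrow A (projT1 c) -> essential_at F (recolor g (projT2 c)).
pose G : set_system X := fun P =>
  exists cs, forall g, (forall c, List.In c cs -> S c g) -> P g.
have i0 : 'I_t := Ordinal (@leq_trans 2 1 t isT Ht).
have fip : forall cs, exists g, forall c, List.In c cs -> S c g.
  move=> cs; have [D [r [AD [aAD H]]]] := @amalg C Aob F A HA Huniv Hlf cs.
  have [lam Hl] := Hlam D AD aAD.
  pose g (x : hom A F) := match pselect (exists f, comp r f = x) with
     | left h => lam (projT1 (cid h)) | right _ => i0 end.
  have gE : forall f, g (comp r f) = lam f.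
    move=> f; rewrite /g; case: pselect => [h|n]; last first.
      by exfalso; apply: n; exists f.
    case: (cid h) => f' /= Ef'; by rewrite (HC1 _ _ _ _ _ _ Ef').
  exists g => -[B w] Hin /= AB _.
  have [p Ep] := H _ Hin AB.
  simpl in p, Ep; apply: (@ess_ext C F A B t _ _ _ (@ess_restr C F A B D t lam p Hl)) => h.
  by rewrite /recolor /= -Ep -comp_assoc gE.
have GF : ProperFilter G.
  apply: Build_ProperFilter.
    move=> [cs H]; have [g Hg] := fip cs; exact: (H g Hg).
  split.
  - by exists nil.
  - move=> P Q [cs1 H1] [cs2 H2]; exists (cs1 ++ cs2) => g Hg; split;
      [apply: H1 | apply: H2] => c Hc; apply: Hg; apply: List.in_or_app; by [left|right].
  - move=> P Q PQ [cs H]; exists cs => g Hg; apply: PQ; exact: H.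
have [U [UU GU]] := ultraFilterLemma GF.
have pickc : forall x : hom A F, exists i, i < t /\ U (fun g : X => nat_of_ord (g x) = i).
  move=> x; apply: (@ultra_fin X U UU (fun g : X => nat_of_ord (g x)) t _ (@filterT _ U _)).
  by move=> g _.
pose gam (x : hom A F) : 'I_t := Ordinal (proj1 (projT2 (cid (pickc x)))).
have Ugam : forall x, U (fun g : X => nat_of_ord (g x) = nat_of_ord (gam x)).
  by move=> x; rewrite /gam /=; case: (cid (pickc x)) => i [].
exists gam => B AB aAB w.
have [l Hl] := HC3 A B (HAfin A HA) (HAfin B AB).
have UV : U (fun g : X => forall f, List.In f l ->
               nat_of_ord (g (comp w f)) = nat_of_ord (gam (comp w f))).
  elim: l {Hl} => [|f l IH].
    by apply: filterS (@filterT _ U _) => g _ f [].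
  apply: filterS (filterI (Ugam (comp w f)) IH) => g [E1 E2] f' [<-|Hf']; first exact: E1.
  exact: E2.
have US : U (S (existT _ B w)).
  by apply: GU; exists [:: existT _ B w] => g Hg; apply: Hg; left.
have [g [Sg Vg]] := @filter_ex _ U _ _ (filterI US UV).
apply: (@ess_ext C F A B t _ _ _ (Sg AB aAB)) => h.
by rewrite /recolor; apply: val_inj; apply: Vg; exact: Hl.
Qed.
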